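(* Let $f:\mathbb{R}\to\mathbb{R}$ and $g:\mathbb{R}\to\mathbb{R}$ be real functions that are (real-)analytic in a neighborhood $U$ of a point $x_0\in\mathbb{R}$. Let $K\ge 0$ be an integer such that $f^{(j)}(x_0)=g^{(j)}(x_0)=0$ for $j=0,1,\dots,K$, and $g^{(K+1)}(x_0)\neq 0$. Let $R>0$ be such that $V=[x_0-R,\,x_0+R]\subset U$ and such that $f^{(j)}(x)\neq 0$ and $g^{(j)}(x)\neq 0$ for all $x\in V$ with $x\neq x_0$ and all $j=0,1,\dots,K+1$. Then \[ \lim_{n\to\infty}\frac{I_n^f(x)}{I_n^g(x)}=\frac{f^{(K+1)}(x_0)}{g^{(K+1)}(x_0)}, \] and the convergence is uniform in $x\in V\setminus\{x_0\}$, where the sequences $I_n^f$, $I_n^g$ are constructed with $x_0$ as the lower limit of integration.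
   Context: For a continuous function $h:\mathbb{R}\to\mathbb{R}$ and the point $x_0\in\mathbb{R}$, the sequence of functions $I_n^h$ ($n=0,1,2,\dots$) is defined inductively by $I_0^h(x)=h(x)$ and $I_{n+1}^h(x)=\int_{x_0}^{x} I_n^h(t)\,dt$. The notation $h^{(j)}$ denotes the $j$-th derivative of $h$ (with $h^{(0)}=h$). *)

(* Defs.v *)
From Stdlib Require Import Reals.
From Coquelicot Require Import Coquelicot.
Open Scope R_scope.

Definition analytic_at (f : R -> R) (c : R) : Prop :=
  exists (a : nat -> R) (r : R), 0 < r /\
    forall x, Rabs (x - c) < r -> is_pseries a (x - c) (f x).

Definition analytic_on (U : R -> Prop) (f : R -> R) : Prop :=
  forall c, U c -> analytic_at f c.

Fixpoint Iint (h : R -> R) (x0 : R) (n : nat) : R -> R :=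
  match n with
  | O => h
  | S m => fun x => RInt (Iint h x0 m) x0 x
  end.

(* Main.v *)
Require Import Defs.
From Stdlib Require Import Reals.
From Stdlib Require Import Lra Lia Factorial.
From Coquelicot Require Import Coquelicot.
Open Scope R_scope.

Ltac toR := match goal with |- @eq _ ?a ?b => change (@eq R a b) end.

Lemma minus_R (a b : R) : minus a b = a - b.
Proof. reflexivity. Qed.

Lemma cont_pow (C c : R) (m : nat) (t : R) : continuous (fun t => C * (t - c) ^ m) t.
Proof.
  apply (ex_derive_continuous (K:=R_AbsRing) (V:=R_NormedModule)). auto_derive. auto.
Qed.

Lemma cont_pow' (C c : R) (m : nat) (t : R) : continuous (fun t => C * (c - t) ^ m) t.
Proof.
  apply (ex_derive_continuous (K:=R_AbsRing) (V:=R_NormedModule)). auto_derive. auto.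
Qed.

Lemma int_bound (d : R -> R) (C : R) (m : nat) (x0 x : R) :
  ex_RInt d x0 x ->
  (forall t, Rmin x0 x <= t <= Rmax x0 x -> Rabs (d t) <= C * Rabs (t - x0) ^ m) ->
  Rabs (RInt d x0 x) <= C * Rabs (x - x0) ^ (S m) / INR (S m).
Proof.
  intros Hex Hb.
  assert (HS : 0 < INR (S m)) by (apply lt_0_INR; lia).
  destruct (Rle_or_lt x0 x) as [Hle|Hlt].
  - assert (Hg : is_RInt (fun t => C * (t - x0) ^ m) x0 x
                  (C * (x - x0) ^ (S m) / INR (S m))).
    { replace (C * (x - x0) ^ (S m) / INR (S m)) with
        (minus (C * (x - x0) ^ (S m) / INR (S m)) (C * (x0 - x0) ^ (S m) / INR (S m))).
      2:{ toR. rewrite minus_R. replace ((x0 - x0) ^ S m) with 0 by (simpl; ring). unfold Rdiv; ring. }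
      apply (is_RInt_derive (fun t => C * (t - x0) ^ (S m) / INR (S m))).
      - intros t _. auto_derive; auto.
        change (match m with 0%nat => 1 | S _ => INR m + 1 end) with (INR (S m)).
        toR. fold (t - x0). set (p := (t - x0) ^ m). field. lra.
      - intros t _. apply cont_pow. }
    rewrite Rabs_pos_eq with (x := x - x0) by lra.
    refine (norm_RInt_le d (fun t => C * (t - x0) ^ m) x0 x (RInt d x0 x) _ Hle _ (RInt_correct _ _ _ Hex) Hg).
    intros t Ht. rewrite <- (Rabs_pos_eq (t - x0)) by lra. apply Hb.
    rewrite Rmin_left, Rmax_right; lra.
  - assert (Hg : is_RInt (fun t => C * (x0 - t) ^ m) x x0
                  (C * (x0 - x) ^ (S m) / INR (S m))).
    { replace (C * (x0 - x) ^ (S m) / INR (S m)) with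
        (minus (- C * (x0 - x0) ^ (S m) / INR (S m)) (- C * (x0 - x) ^ (S m) / INR (S m))).
      2:{ toR. rewrite minus_R. replace ((x0 - x0) ^ S m) with 0 by (simpl; ring). unfold Rdiv; ring. }
      apply (is_RInt_derive (fun t => - C * (x0 - t) ^ (S m) / INR (S m))).
      - intros t _. auto_derive; auto.
        change (match m with 0%nat => 1 | S _ => INR m + 1 end) with (INR (S m)).
        toR. fold (x0 - t). set (p := (x0 - t) ^ m). field. lra.
      - intros t _. apply cont_pow'. }
    rewrite Rabs_minus_sym, Rabs_pos_eq with (x := x0 - x) by lra.
    assert (Hex' : ex_RInt d x x0) by (apply ex_RInt_swap; auto).
    rewrite <- opp_RInt_swap by exact Hex'.
    change (Rabs (opp (RInt d x x0))) with (Rabs (- (RInt d x x0))).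
    rewrite Rabs_Ropp.
    refine (norm_RInt_le d (fun t => C * (x0 - t) ^ m) x x0 (RInt d x x0) _ (Rlt_le _ _ Hlt) _ (RInt_correct _ _ _ Hex') Hg).
    intros t Ht. rewrite <- (Rabs_pos_eq (x0 - t)) by lra. rewrite Rabs_minus_sym. apply Hb.
    rewrite Rmin_right, Rmax_left; lra.
Qed.

Lemma between_abs (x0 b z : R) : Rmin x0 b <= z <= Rmax x0 b -> Rabs (z - x0) <= Rabs (b - x0).
Proof.
  unfold Rmin, Rmax; destruct (Rle_dec x0 b); intros [H1 H2];
  unfold Rabs; repeat destruct Rcase_abs; lra.
Qed.

Lemma Iint_cont (h : R -> R) (x0 R1 : R) :
  (forall t, Rabs (t - x0) < R1 -> continuous h t) ->
  forall n t, Rabs (t - x0) < R1 -> continuous (Iint h x0 n) t.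
Proof.
  intros Hh n. induction n as [|n IH]; intros t Ht; [simpl; auto|].
  simpl.
  apply (ex_derive_continuous (K:=R_AbsRing) (V:=R_NormedModule)).
  exists (Iint h x0 n t).
  apply (is_derive_RInt (Iint h x0 n) (fun x => RInt (Iint h x0 n) x0 x) x0 t).
  2: apply IH; auto.
  assert (He : 0 < R1 - Rabs (t - x0)) by lra.
  exists (mkposreal _ He). intros b Hb.
  change (Rabs (b - t) < R1 - Rabs (t - x0)) in Hb.
  apply (RInt_correct (V:=R_CompleteNormedModule)). apply (ex_RInt_continuous (V:=R_CompleteNormedModule)). intros z Hz.
  apply IH. apply between_abs in Hz.
  assert (Rabs (b - x0) <= Rabs (b - t) + Rabs (t - x0)).
  { replace (b - x0) with ((b - t) + (t - x0)) by ring. apply Rabs_triang. }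
  lra.
Qed.

Lemma approx (h : R -> R) (x0 R0 R1 : R) (k : nat) (a B : R) :
  R0 < R1 -> (forall t, Rabs (t - x0) < R1 -> continuous h t) ->
  (forall t, Rabs (t - x0) <= R0 -> Rabs (h t - a * (t - x0) ^ k) <= B * Rabs (t - x0) ^ (S k)) ->
  forall n x, Rabs (x - x0) <= R0 ->
  Rabs (Iint h x0 n x - a * (x - x0) ^ (k + n) * INR (fact k) / INR (fact (k + n)))
    <= B * Rabs (x - x0) ^ (S (k + n)) * INR (fact (S k)) / INR (fact (S (k + n))).
Proof.
  intros HR Hc Hb n. induction n as [|n IH]; intros x Hx.
  - simpl Iint. rewrite Nat.add_0_r.
    replace (a * (x - x0) ^ k * INR (fact k) / INR (fact k)) with (a * (x - x0) ^ k)
      by (field; apply INR_fact_neq_0).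
    replace (B * Rabs (x - x0) ^ S k * INR (fact (S k)) / INR (fact (S k)))
      with (B * Rabs (x - x0) ^ S k) by (field; apply INR_fact_neq_0).
    auto.
  - rewrite Nat.add_succ_r.
    set (P := fun t => a * (t - x0) ^ (k + n) * INR (fact k) / INR (fact (k + n))).
    assert (HcI : forall t, Rabs (t - x0) < R1 -> continuous (Iint h x0 n) t)
      by (apply Iint_cont; auto).
    assert (Hin : forall z, Rmin x0 x <= z <= Rmax x0 x -> Rabs (z - x0) <= Rabs (x - x0))
      by (intros; apply between_abs; auto).
    assert (HexI : ex_RInt (Iint h x0 n) x0 x).
    { apply (ex_RInt_continuous (V:=R_CompleteNormedModule)). intros z Hz.
      apply HcI. specialize (Hin z Hz). lra. }
    assert (HexP : ex_RInt P x0 x).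
    { apply (ex_RInt_continuous (V:=R_CompleteNormedModule)). intros z Hz.
      unfold P. apply (ex_derive_continuous (K:=R_AbsRing) (V:=R_NormedModule)).
      auto_derive. auto. }
    assert (HP : RInt P x0 x = a * (x - x0) ^ (S (k + n)) * INR (fact k) / INR (fact (S (k + n)))).
    { apply is_RInt_unique.
      replace (a * (x - x0) ^ (S (k + n)) * INR (fact k) / INR (fact (S (k + n)))) with
        (minus (a * (x - x0) ^ (S (k + n)) * INR (fact k) / INR (fact (S (k + n))))
               (a * (x0 - x0) ^ (S (k + n)) * INR (fact k) / INR (fact (S (k + n))))).
      2:{ toR. rewrite minus_R. replace ((x0 - x0) ^ S (k + n)) with 0 by (simpl; ring).
          unfold Rdiv; ring. }
      apply (is_RInt_derive (fun t => a * (t - x0) ^ (S (k + n)) * INR (fact k) / INR (fact (S (k + n))))).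
      - intros t _. unfold P. auto_derive; [exact I|].
        change (match (k + n)%nat with 0%nat => 1 | S _ => INR (k + n) + 1 end) with (INR (S (k + n))).
        toR. fold (t - x0). set (p := (t - x0) ^ (k + n)).
        change (fact (k + n) + (k + n) * fact (k + n))%nat with (S (k+n) * fact (k+n))%nat. rewrite mult_INR.
        field. split; [apply INR_fact_neq_0 | apply not_0_INR; lia].
      - intros t _. unfold P. apply (ex_derive_continuous (K:=R_AbsRing) (V:=R_NormedModule)).
        auto_derive. auto. }
    simpl Iint. rewrite <- HP.
    change (RInt (Iint h x0 n) x0 x - RInt P x0 x) with (minus (RInt (Iint h x0 n) x0 x) (RInt P x0 x)).
    rewrite <- (RInt_minus (V:=R_CompleteNormedModule)) by auto.
    eapply Rle_trans.
    + apply (int_bound _ (B * INR (fact (S k)) / INR (fact (S (k + n)))) (S (k + n))).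
      * apply (ex_RInt_minus (V:=R_CompleteNormedModule)); auto.
      * intros t Ht. specialize (Hin t Ht).
        eapply Rle_trans. apply (IH t). lra.
        right. field. apply INR_fact_neq_0.
    + right. rewrite (fact_simpl (S (k + n))), mult_INR.
      field. split; [apply INR_fact_neq_0 | apply not_0_INR; lia].
Qed.

Lemma term_le_sum (u : nat -> R) (N n : nat) :
  (n <= N)%nat -> (forall k, 0 <= u k) -> u n <= sum_f_R0 u N.
Proof.
  intros Hn Hu. induction N as [|N IH].
  - assert (n = 0%nat) by lia. subst. simpl. lra.
  - simpl. destruct (Nat.eq_dec n (S N)) as [->|Hne].
    + assert (0 <= sum_f_R0 u N).
      { clear IH Hn. induction N; simpl; [apply Hu|]. specialize (Hu (S N)). lra. }
      lra.
    + specialize (IH ltac:(lia)). specialize (Hu (S N)). lra.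
Qed.

Lemma rad (a : nat -> R) (f : R -> R) (c r : R) :
  0 < r -> (forall x, Rabs (x - c) < r -> is_pseries a (x - c) (f x)) ->
  Rbar_le (r / 2) (CV_radius a).
Proof.
  intros Hr Hs.
  destruct (CV_radius_bounded a) as [Hub _]. apply Hub.
  assert (Hex : ex_series (fun n => a n * (r / 2) ^ n)).
  { apply ex_pseries_R. exists (f (c + r / 2)).
    pose proof (Hs (c + r / 2)) as H. replace (c + r / 2 - c) with (r / 2) in H by ring.
    apply H. rewrite Rabs_pos_eq; lra. }
  apply ex_series_lim_0 in Hex. apply is_lim_seq_spec in Hex.
  destruct (Hex (mkposreal 1 Rlt_0_1)) as [N HN]. simpl in HN.
  exists (1 + sum_f_R0 (fun k => Rabs (a k * (r / 2) ^ k)) N).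
  intros n. destruct (Compare_dec.le_lt_dec N n) as [Hle|Hlt].
  - specialize (HN n Hle). rewrite Rminus_0_r in HN.
    assert (0 <= sum_f_R0 (fun k => Rabs (a k * (r / 2) ^ k)) N).
    { apply cond_pos_sum. intros; apply Rabs_pos. }
    lra.
  - assert (Rabs (a n * (r / 2) ^ n) <= sum_f_R0 (fun k => Rabs (a k * (r / 2) ^ k)) N).
    { apply (term_le_sum (fun k => Rabs (a k * (r / 2) ^ k))). lia. intros; apply Rabs_pos. }
    lra.
Qed.

Lemma loc_eq (a : nat -> R) (f : R -> R) (c r : R) :
  0 < r -> (forall x, Rabs (x - c) < r -> is_pseries a (x - c) (f x)) ->
  locally c (fun y => PSeries a (y - c) = f y).
Proof.
  intros Hr Hs. exists (mkposreal r Hr). intros y Hy.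
  change (Rabs (y - c) < r) in Hy. apply is_pseries_unique. auto.
Qed.

Lemma an_cont (f : R -> R) (c : R) : analytic_at f c -> continuous f c.
Proof.
  intros [a [r [Hr Hs]]].
  pose proof (rad a f c r Hr Hs) as Hrad.
  apply (continuous_ext_loc _ (fun y => PSeries a (y - c))).
  - apply (loc_eq a f c r Hr Hs).
  - apply (continuous_comp (fun y => y - c) (PSeries a)).
    + apply (continuous_minus (fun y => y) (fun _ => c)); [apply continuous_id|apply continuous_const].
    + apply continuity_pt_filterlim. apply PSeries_continuity.
      rewrite Rminus_diag, Rabs_R0. eapply Rbar_lt_le_trans; [|exact Hrad]. simpl. lra.
Qed.

Lemma coef (a : nat -> R) (f : R -> R) (c r : R) :
  0 < r -> (forall x, Rabs (x - c) < r -> is_pseries a (x - c) (f x)) ->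
  forall k, Derive_n f k c = a k * INR (fact k).
Proof.
  intros Hr Hs k.
  pose proof (rad a f c r Hr Hs) as Hrad.
  rewrite <- (Derive_n_ext_loc (fun y => PSeries a (y - c)) f k c (loc_eq a f c r Hr Hs)).
  unfold Rminus. rewrite Derive_n_comp_trans. rewrite Rplus_opp_r.
  apply Derive_n_coef. eapply Rbar_lt_le_trans; [|exact Hrad]. simpl. lra.
Qed.

Lemma rad_decr (a : nat -> R) (n : nat) : CV_radius (PS_decr_n a n) = CV_radius a.
Proof.
  induction n as [|n IH].
  - apply CV_radius_ext. intros; reflexivity.
  - rewrite <- IH, <- (CV_radius_decr_1 (PS_decr_n a n)). apply CV_radius_ext.
    intros m. unfold PS_decr_n, PS_decr_1. f_equal. lia.
Qed.

Lemma Rabs_le_inv (y b : R) : Rabs y <= b -> - b <= y <= b.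
Proof. unfold Rabs; destruct Rcase_abs; intros; lra. Qed.

Lemma taylor_bound (f : R -> R) (x0 R0 R1 : R) (K : nat) :
  analytic_at f x0 -> (forall j, (j <= K)%nat -> Derive_n f j x0 = 0) ->
  0 < R0 -> R0 < R1 -> (forall t, Rabs (t - x0) < R1 -> continuous f t) ->
  exists B, forall t, Rabs (t - x0) <= R0 ->
    Rabs (f t - Derive_n f (S K) x0 / INR (fact (S K)) * (t - x0) ^ (S K))
      <= B * Rabs (t - x0) ^ (S (S K)).
Proof.
  intros [a [r [Hr Hs]]] Hz HR0 HR1 Hc.
  pose proof (rad a f x0 r Hr Hs) as Hrad.
  pose proof (coef a f x0 r Hr Hs) as Hco.
  set (A := Derive_n f (S K) x0 / INR (fact (S K))).
  assert (HA : A = a (S K)).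
  { unfold A. rewrite Hco. field. apply INR_fact_neq_0. }
  assert (Ha0 : forall k, (k <= K)%nat -> a k = 0).
  { intros k Hk. pose proof (Hz k Hk) as H. rewrite Hco in H.
    apply Rmult_integral in H. destruct H as [H|H]; auto.
    exfalso. apply (INR_fact_neq_0 k). exact H. }
  set (rho := r / 4).
  set (m := S (S K)).
  set (q := PSeries (PS_decr_n a m)).
  assert (Hrho : 0 < rho) by (unfold rho; lra).
  assert (Hrep : forall t, Rabs (t - x0) <= rho ->
            f t - A * (t - x0) ^ (S K) = (t - x0) ^ m * q (t - x0)).
  { intros t Ht.
    assert (Hlt : Rabs (t - x0) < r) by (unfold rho in Ht; lra).
    rewrite <- (is_pseries_unique _ _ _ (Hs t Hlt)).
    rewrite (PSeries_decr_n a (S K)).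
    2:{ exists (f t). exact (Hs t Hlt). }
    simpl sum_f_R0. rewrite sum_eq_R0.
    2:{ intros k Hk. rewrite Ha0 by auto. ring. }
    rewrite HA. unfold q, m. change ((t - x0) * (t - x0) ^ K) with ((t - x0) ^ S K). set (p1 := (t - x0) ^ S K). set (p2 := (t - x0) ^ S (S K) * PSeries _ _). ring. }
  assert (Hq : forall y, Rabs y <= rho -> continuity_pt (fun y => Rabs (q y)) y).
  { intros y Hy. apply (continuity_pt_comp q Rabs).
    - unfold q. apply PSeries_continuity. rewrite rad_decr.
      eapply Rbar_lt_le_trans; [|exact Hrad]. simpl. unfold rho in Hy. lra.
    - apply continuity_pt_filterlim. apply continuous_Rabs. }
  destruct (continuity_ab_maj (fun y => Rabs (q y)) (- rho) rho) as [yq [Hyq1 Hyq2]].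
  { lra. }
  { intros y Hy. apply Hq. apply Rabs_le. lra. }
  set (D := fun t => Rabs (f t - A * (t - x0) ^ (S K))).
  destruct (continuity_ab_maj D (x0 - R0) (x0 + R0)) as [td [Htd1 Htd2]].
  { lra. }
  { intros t Ht. apply continuity_pt_filterlim. unfold D.
    apply (continuous_Rabs_comp (fun t => f t - A * (t - x0) ^ S K)).
    apply (continuous_minus f (fun t => A * (t - x0) ^ S K)).
    - apply Hc. assert (Rabs (t - x0) <= R0) by (apply Rabs_le; lra). lra.
    - apply (ex_derive_continuous (K:=R_AbsRing) (V:=R_NormedModule)). auto_derive. auto. }
  set (Mq := Rabs (q yq)). set (Md := D td).
  assert (HMq : 0 <= Mq) by apply Rabs_pos.
  assert (HMd : 0 <= Md) by apply Rabs_pos.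
  assert (Hrm : 0 < rho ^ m) by (apply pow_lt; auto).
  exists (Mq + Md / rho ^ m). intros t Ht. fold A. fold m.
  assert (Hpm : 0 <= Rabs (t - x0) ^ m) by (apply pow_le; apply Rabs_pos).
  assert (HMr : 0 <= Md / rho ^ m) by (apply Rdiv_le_0_compat; lra).
  destruct (Rle_or_lt (Rabs (t - x0)) rho) as [Hle|Hgt].
  - rewrite Hrep by auto. rewrite Rabs_mult, <- RPow_abs.
    assert (Rabs (q (t - x0)) <= Mq).
    { apply (Hyq1 (t - x0)). apply Rabs_le_inv in Hle. lra. }
    assert (Rabs (t - x0) ^ m * Rabs (q (t - x0)) <= Rabs (t - x0) ^ m * Mq)
      by (apply Rmult_le_compat_l; auto).
    assert (0 <= Md / rho ^ m * Rabs (t - x0) ^ m) by (apply Rmult_le_pos; auto).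
    nra.
  - assert (H1 : D t <= Md).
    { apply Htd1. apply Rabs_le_inv in Ht. lra. }
    assert (H2 : rho ^ m <= Rabs (t - x0) ^ m) by (apply pow_incr; lra).
    assert (H3 : Md = Md / rho ^ m * rho ^ m) by (field; lra).
    assert (Md / rho ^ m * rho ^ m <= Md / rho ^ m * Rabs (t - x0) ^ m)
      by (apply Rmult_le_compat_l; auto).
    assert (0 <= Mq * Rabs (t - x0) ^ m) by (apply Rmult_le_pos; auto).
    unfold D in H1. nra.
Qed.

Lemma div_le (a b c d : R) : 0 <= a <= b -> 0 < d <= c -> a / c <= b / d.
Proof.
  intros [Ha Hab] [Hd Hdc]. unfold Rdiv.
  apply Rmult_le_compat; try lra.
  - left; apply Rinv_0_lt_compat; lra.
  - apply Rinv_le_contravar; lra.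
Qed.

Lemma ratio (af ag eps : R) : ag <> 0 -> 0 < eps ->
  exists tau, 0 < tau /\ forall u v, Rabs u <= tau -> Rabs v <= tau ->
    ag + v <> 0 /\ Rabs ((af + u) / (ag + v) - af / ag) < eps.
Proof.
  intros Hag Heps.
  assert (Hpa : 0 < Rabs ag) by (apply Rabs_pos_lt; auto).
  set (Z := Rabs af + Rabs ag).
  assert (HZ : 0 < Z) by (unfold Z; pose proof (Rabs_pos af); lra).
  set (tau := Rmin (Rabs ag / 2) (eps * (Rabs ag * Rabs ag) / (4 * Z))).
  assert (Ht1 : tau <= Rabs ag / 2) by apply Rmin_l.
  assert (Ht2 : tau <= eps * (Rabs ag * Rabs ag) / (4 * Z)) by apply Rmin_r.
  assert (Htp : 0 < tau).
  { unfold tau. apply Rmin_pos; [lra|]. apply Rdiv_lt_0_compat; [|lra].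
    apply Rmult_lt_0_compat; [lra|]. apply Rmult_lt_0_compat; lra. }
  exists tau. split; auto. intros u v Hu Hv.
  assert (Hagv : Rabs ag / 2 <= Rabs (ag + v)).
  { pose proof (Rabs_triang (ag + v) (- v)) as H.
    replace (ag + v + - v) with ag in H by ring. rewrite Rabs_Ropp in H. lra. }
  assert (Hnz : ag + v <> 0).
  { intro H. rewrite H, Rabs_R0 in Hagv. lra. }
  split; auto.
  replace ((af + u) / (ag + v) - af / ag) with ((ag * u - af * v) / (ag * (ag + v)))
    by (field; auto).
  unfold Rdiv. rewrite Rabs_mult, Rabs_inv, Rabs_mult. fold (Rabs (ag * u - af * v) / (Rabs ag * Rabs (ag + v))).
  assert (Hn : Rabs (ag * u - af * v) <= Z * tau).
  { eapply Rle_trans. apply Rabs_triang. rewrite Rabs_Ropp, !Rabs_mult.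
    unfold Z. pose proof (Rabs_pos ag). pose proof (Rabs_pos af).
    pose proof (Rabs_pos u). pose proof (Rabs_pos v). nra. }
  eapply Rle_lt_trans.
  - apply (div_le _ (Z * tau) _ (Rabs ag * (Rabs ag / 2))).
    + split; [apply Rabs_pos|auto].
    + split; [nra|]. apply Rmult_le_compat_l; lra.
  - apply Rle_lt_trans with (eps / 2); [|lra].
    assert (Z * tau <= eps * (Rabs ag * Rabs ag) / 4).
    { apply Rle_trans with (Z * (eps * (Rabs ag * Rabs ag) / (4 * Z))).
      apply Rmult_le_compat_l; lra. right. field. lra. }
    apply Rle_trans with (eps * (Rabs ag * Rabs ag) / 4 / (Rabs ag * (Rabs ag / 2))).
    + unfold Rdiv at 1 3. apply Rmult_le_compat_r; [|auto].
      left. apply Rinv_0_lt_compat. nra.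
    + right. field. lra.
Qed.

Lemma ubound (I A B h R0 : R) (k n : nat) :
  h <> 0 -> Rabs h <= R0 ->
  Rabs (I - A * h ^ (k + n) * INR (fact k) / INR (fact (k + n)))
    <= B * Rabs h ^ (S (k + n)) * INR (fact (S k)) / INR (fact (S (k + n))) ->
  Rabs (I / (h ^ (k + n) * INR (fact k) / INR (fact (k + n))) - A)
    <= Rabs B * R0 * INR (S k) / INR (S n).
Proof.
  intros Hh HR Hb.
  assert (Hf1 := INR_fact_lt_0 k). assert (Hf2 := INR_fact_lt_0 (k + n)).
  assert (Hhp : 0 < Rabs h) by (apply Rabs_pos_lt; auto).
  assert (Hp : 0 < Rabs h ^ (k + n)) by (apply pow_lt; auto).
  assert (Hpn : h ^ (k + n) <> 0) by (apply pow_nonzero; auto).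
  rewrite (fact_simpl k), (fact_simpl (k + n)), !mult_INR in Hb.
  simpl pow in Hb.
  set (P := h ^ (k + n) * INR (fact k) / INR (fact (k + n))).
  assert (HP : P <> 0).
  { unfold P. apply Rmult_integral_contrapositive_currified.
    apply Rmult_integral_contrapositive_currified; lra. apply Rinv_neq_0_compat; lra. }
  assert (HaP : Rabs P = Rabs h ^ (k + n) * INR (fact k) / INR (fact (k + n))).
  { unfold P, Rdiv. rewrite !Rabs_mult, Rabs_inv, <- RPow_abs.
    rewrite (Rabs_pos_eq (INR (fact k))), (Rabs_pos_eq (INR (fact (k + n)))); lra. }
  replace (I / P - A) with ((I - A * h ^ (k + n) * INR (fact k) / INR (fact (k + n))) / P)
    by (unfold P; field; split; lra).
  unfold Rdiv at 1. rewrite Rabs_mult, Rabs_inv, HaP.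
  assert (HS1 : 0 < INR (S k)) by (apply lt_0_INR; lia).
  assert (HS2 : 0 < INR (S (k + n))) by (apply lt_0_INR; lia).
  assert (HS3 : 0 < INR (S n)) by (apply lt_0_INR; lia).
  assert (HS23 : INR (S n) <= INR (S (k + n))) by (apply le_INR; lia).
  assert (Hpos : 0 < / (Rabs h ^ (k + n) * INR (fact k) / INR (fact (k + n)))).
  { apply Rinv_0_lt_compat. unfold Rdiv. apply Rmult_lt_0_compat; [nra|].
    apply Rinv_0_lt_compat; lra. }
  eapply Rle_trans. { apply Rmult_le_compat_r; [left; exact Hpos|exact Hb]. }
  set (hp := Rabs h ^ (k + n)).
  replace (B * (Rabs h * hp) * (INR (S k) * INR (fact k)) / (INR (S (k + n)) * INR (fact (k + n))) *
   / (hp * INR (fact k) / INR (fact (k + n)))) with (B * Rabs h * INR (S k) / INR (S (k + n)))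
    by (field; split; [lra|split; [lra|split; [unfold hp; apply Rgt_not_eq; apply pow_lt; lra|lra]]]).
  apply Rle_trans with (Rabs B * Rabs h * INR (S k) / INR (S (k + n))).
  { unfold Rdiv. apply Rmult_le_compat_r; [left; apply Rinv_0_lt_compat; lra|].
    apply Rmult_le_compat_r; [lra|]. apply Rmult_le_compat_r; [lra|]. apply Rle_abs. }
  apply (div_le (Rabs B * Rabs h * INR (S k)) (Rabs B * R0 * INR (S k))) ; [|lra].
  pose proof (Rabs_pos B). split; [apply Rmult_le_pos; [apply Rmult_le_pos|]; lra|].
  apply Rmult_le_compat_r; [lra|]. apply Rmult_le_compat_l; lra.
Qed.

Theorem lemma1 (f g : R -> R) (x0 : R) (U : R -> Prop) (K : nat) (R0 : R) :
  open U -> U x0 ->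
  analytic_on U f -> analytic_on U g ->
  (forall j, (j <= K)%nat -> Derive_n f j x0 = 0 /\ Derive_n g j x0 = 0) ->
  Derive_n g (S K) x0 <> 0 ->
  0 < R0 ->
  (forall x, Rabs (x - x0) <= R0 -> U x) ->
  (forall x j, Rabs (x - x0) <= R0 -> x <> x0 -> (j <= S K)%nat ->
     Derive_n f j x <> 0 /\ Derive_n g j x <> 0) ->
  forall eps : R, 0 < eps ->
    exists N : nat, forall n : nat, (N <= n)%nat ->
      forall x : R, Rabs (x - x0) <= R0 -> x <> x0 ->
        Rabs (Iint f x0 n x / Iint g x0 n x
              - Derive_n f (S K) x0 / Derive_n g (S K) x0) < eps.
Proof.
  intros HU HUx0 Hf Hg Hz HgK HR0 HV _ eps Heps.
  assert (HUp : U (x0 + R0)).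
  { apply HV. replace (x0 + R0 - x0) with R0 by ring. rewrite Rabs_pos_eq; lra. }
  assert (HUm : U (x0 - R0)).
  { apply HV. replace (x0 - R0 - x0) with (- R0) by ring. rewrite Rabs_Ropp, Rabs_pos_eq; lra. }
  destruct (HU _ HUp) as [e1 He1]. destruct (HU _ HUm) as [e2 He2].
  assert (Hm1 := Rmin_l e1 e2). assert (Hm2 := Rmin_r e1 e2).
  assert (Hmp : 0 < Rmin e1 e2) by (apply Rmin_pos; apply cond_pos).
  set (R1 := R0 + Rmin e1 e2 / 2).
  assert (HR1 : R0 < R1) by (unfold R1; lra).
  assert (HW : forall t, Rabs (t - x0) < R1 -> U t).
  { intros t Ht. destruct (Rle_or_lt (Rabs (t - x0)) R0) as [Hle|Hgt]; [apply HV; auto|].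
    destruct (Rle_or_lt x0 t).
    - apply He1. change (Rabs (t - (x0 + R0)) < e1).
      unfold R1 in Ht. unfold Rabs in *; repeat destruct Rcase_abs; lra.
    - apply He2. change (Rabs (t - (x0 - R0)) < e2).
      unfold R1 in Ht. unfold Rabs in *; repeat destruct Rcase_abs; lra. }
  assert (Hcf : forall t, Rabs (t - x0) < R1 -> continuous f t)
    by (intros t Ht; apply an_cont; apply Hf; apply HW; auto).
  assert (Hcg : forall t, Rabs (t - x0) < R1 -> continuous g t)
    by (intros t Ht; apply an_cont; apply Hg; apply HW; auto).
  destruct (taylor_bound f x0 R0 R1 K (Hf x0 HUx0) (fun j Hj => proj1 (Hz j Hj)) HR0 HR1 Hcf)
    as [Bf HBf].
  destruct (taylor_bound g x0 R0 R1 K (Hg x0 HUx0) (fun j Hj => proj2 (Hz j Hj)) HR0 HR1 Hcg)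
    as [Bg HBg].
  set (Af := Derive_n f (S K) x0 / INR (fact (S K))) in *.
  set (Ag := Derive_n g (S K) x0 / INR (fact (S K))) in *.
  assert (Hfk := INR_fact_lt_0 (S K)).
  assert (Hag : Ag <> 0).
  { unfold Ag, Rdiv. apply Rmult_integral_contrapositive_currified; auto.
    apply Rinv_neq_0_compat; lra. }
  pose proof (approx f x0 R0 R1 (S K) Af Bf HR1 Hcf HBf) as Apf.
  pose proof (approx g x0 R0 R1 (S K) Ag Bg HR1 Hcg HBg) as Apg.
  destruct (ratio Af Ag eps Hag Heps) as [tau [Htau Hr]].
  set (C := (Rabs Bf + Rabs Bg) * R0 * INR (S (S K))).
  assert (HC : 0 <= C).
  { unfold C. pose proof (Rabs_pos Bf). pose proof (Rabs_pos Bg).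
    pose proof (pos_INR (S (S K))). apply Rmult_le_pos; [apply Rmult_le_pos|]; lra. }
  destruct (INR_unbounded (C / tau)) as [N HN].
  exists N. intros n Hn x Hx Hxx0.
  assert (Hh : x - x0 <> 0) by lra.
  assert (HSn : 0 < INR (S n)) by (apply lt_0_INR; lia).
  assert (HNn : INR N <= INR (S n)) by (apply le_INR; lia).
  assert (HCt : C / INR (S n) <= tau).
  { assert (C < tau * INR (S n)).
    { assert (C / tau * tau = C) by (field; lra).
      assert (C / tau < INR (S n)) by lra. nra. }
    apply Rle_trans with (tau * INR (S n) / INR (S n)).
    - unfold Rdiv. apply Rmult_le_compat_r; [left; apply Rinv_0_lt_compat; lra|lra].
    - right. field. lra. }
  set (P := (x - x0) ^ (S K + n) * INR (fact (S K)) / INR (fact (S K + n))).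
  assert (HP : P <> 0).
  { unfold P, Rdiv. apply Rmult_integral_contrapositive_currified.
    apply Rmult_integral_contrapositive_currified. apply pow_nonzero; auto. lra.
    apply Rinv_neq_0_compat. apply INR_fact_neq_0. }
  set (u := Iint f x0 n x / P - Af).
  set (v := Iint g x0 n x / P - Ag).
  assert (Hu : Rabs u <= tau).
  { eapply Rle_trans; [apply (ubound _ _ Bf _ R0); auto; apply Apf; auto|].
    eapply Rle_trans; [|exact HCt]. unfold C, Rdiv.
    apply Rmult_le_compat_r; [left; apply Rinv_0_lt_compat; lra|].
    apply Rmult_le_compat_r; [apply pos_INR|]. apply Rmult_le_compat_r; [lra|].
    pose proof (Rabs_pos Bg). lra. }
  assert (Hv : Rabs v <= tau).
  { eapply Rle_trans; [apply (ubound _ _ Bg _ R0); auto; apply Apg; auto|].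
    eapply Rle_trans; [|exact HCt]. unfold C, Rdiv.
    apply Rmult_le_compat_r; [left; apply Rinv_0_lt_compat; lra|].
    apply Rmult_le_compat_r; [apply pos_INR|]. apply Rmult_le_compat_r; [lra|].
    pose proof (Rabs_pos Bf). lra. }
  destruct (Hr u v Hu Hv) as [Hnz Hlt].
  assert (Hig : Iint g x0 n x <> 0).
  { intro H0. apply Hnz. unfold v. rewrite H0. unfold Rdiv. ring. }
  replace (Iint f x0 n x / Iint g x0 n x) with ((Af + u) / (Ag + v)).
  2:{ unfold u, v. field. auto. }
  replace (Derive_n f (S K) x0 / Derive_n g (S K) x0) with (Af / Ag).
  2:{ unfold Af, Ag. field. split; lra. }
  exact Hlt.
Qed.
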